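(* Let $D$ be an integral domain, $T$ an overring of $D$, $\star$ a semistar operation on $D$ and $\star'$ a semistar operation on $T$ with $T^{\star'}=T$. If $T$ is $(\star,\star')$-linked to $D$, then $T^{\ell_{\star,T}}=T$.
   Context: Let $D$ be an integral domain with quotient field $K$. $\overline{\mathbf F}(D)$ denotes the set of all nonzero $D$-submodules of $K$ and $\mathbf f(D)$ the set of nonzero finitely generated $D$-submodules of $K$. A semistar operation on $D$ is a map $\star:\overline{\mathbf F}(D)\to\overline{\mathbf F}(D)$, $E\mapsto E^\star$, such that for all $0\ne x\in K$ and $E,F\in\overline{\mathbf F}(D)$: (1) $(xE)^\star=xE^\star$; (2) $E\subseteq F\Rightarrow E^\star\subseteq F^\star$; (3) $E\subseteq E^\star$ and $(E^\star)^\star=E^\star$. $\star_f$ is defined by $E^{\star_f}=\bigcup\{F^\star:F\in\mathbf f(D),F\subseteq E\}$. A nonzero ideal $I$ of $D$ is a quasi-$\star$-ideal if $I^\star\cap D=I$; a quasi-$\star$-prime is a prime quasi-$\star$-ideal. An overring of $D$ is a ring $T$ with $D\subseteq T\subseteq K$; semistar operations on $T$ are defined likewise. $T$ is $(\star,\star')$-linked to $D$ if for every nonzero finitely generated ideal $F\subseteq D$ with $F^\star=D^\star$ one has $(FT)^{\star'}=T^{\star'}$. The semistar operation $\ell_{\star,T}$ on $T$ is defined by $E^{\ell_{\star,T}}=\bigcap\{ET_{D\setminus P}: P$ a quasi-$\star_f$-prime ideal of $D\}$ for $E\in\overline{\mathbf F}(T)$ (equal to $K$ if there are none). *)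

(* Defs.v *)
From HB Require Import structures.
From mathcomp Require Import all_boot all_algebra.
Set Implicit Arguments. Unset Strict Implicit. Unset Printing Implicit Defensive.
Import GRing.Theory.
Local Open Scope ring_scope.

(* D, T, and D-submodules of K are represented as Prop-valued predicates on
   the field K (the quotient field). *)
Section Semistar.
Variable K : fieldType.
Implicit Types (R D T E F A B I P : K -> Prop).

Definition ssub A B := forall z, A z -> B z.
Definition seteq A B := forall z, A z <-> B z.

Definition subring R :=
  [/\ R 0, R 1, (forall x y, R x -> R y -> R (x - y))
    & (forall x y, R x -> R y -> R (x * y))].

Definition is_quotient_field R :=
  forall x, exists a b, [/\ R a, R b, b != 0 & x = a / b].

Definition submod R E :=
  [/\ E 0, (forall x y, E x -> E y -> E (x + y))
    & (forall r x, R r -> E x -> E (r * x))].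

Definition Fbar R E := submod R E /\ exists x, E x /\ x != 0.

Definition fin_gen R E :=
  exists s : seq K, forall z, E z <->
    exists c : seq K, [/\ size c = size s, (forall i, (i < size c)%N -> R c`_i)
      & z = \sum_(i < size s) c`_i * s`_i].

Definition ffg R E := Fbar R E /\ fin_gen R E.

Definition scale (x : K) E := fun z => exists e, E e /\ z = x * e.

Definition semistar R (st : (K -> Prop) -> (K -> Prop)) :=
  [/\ (forall E, Fbar R E -> Fbar R (st E)),
      (forall x E, x != 0 -> Fbar R E -> seteq (st (scale x E)) (scale x (st E))),
      (forall E F, Fbar R E -> Fbar R F -> ssub E F -> ssub (st E) (st F))
    & (forall E, Fbar R E -> ssub E (st E) /\ seteq (st (st E)) (st E))].

Definition star_f R (st : (K -> Prop) -> (K -> Prop)) E :=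
  fun z => exists F, [/\ ffg R F, ssub F E & st F z].

Definition ideal R I := ssub I R /\ submod R I.

Definition quasi_ideal R (st : (K -> Prop) -> (K -> Prop)) I :=
  [/\ ideal R I, (exists x, I x /\ x != 0) & seteq (fun z => st I z /\ R z) I].

Definition quasi_prime R (st : (K -> Prop) -> (K -> Prop)) P :=
  [/\ quasi_ideal R st P, ~ P 1
    & (forall a b, R a -> R b -> P (a * b) -> P a \/ P b)].

Definition prodmod A B := fun z =>
  exists n (a b : 'I_n -> K), [/\ (forall i, A (a i)), (forall i, B (b i))
    & z = \sum_i a i * b i].

Definition linked D T (st st' : (K -> Prop) -> (K -> Prop)) :=
  forall F, ffg D F -> ssub F D -> seteq (st F) (st D) ->
    seteq (st' (prodmod T F)) (st' T).

Definition locT D T P := fun z => exists t s, [/\ T t, D s, ~ P s & z = t / s].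

Definition ell D T (st : (K -> Prop) -> (K -> Prop)) E := fun z =>
  forall P, quasi_prime D (star_f D st) P -> prodmod (locT D T P) E z.

End Semistar.

(* Main.v *)
Require Import Defs.
From HB Require Import structures.
From mathcomp Require Import all_boot all_algebra.
From mathcomp Require Import boolp classical_sets.
From mathcomp Require Import ring.
From Stdlib Require Classical_Prop.
Set Implicit Arguments. Unset Strict Implicit. Unset Printing Implicit Defensive.
Import GRing.Theory.
Local Open Scope ring_scope.

Lemma sext (K : fieldType) (A B : K -> Prop) : seteq A B -> A = B.
Proof. by move=> H; apply: funext => z; apply: propext. Qed.

Lemma sr0 (K : fieldType) (R : K -> Prop) : subring R -> R 0.
Proof. by case. Qed.
Lemma sr1 (K : fieldType) (R : K -> Prop) : subring R -> R 1.
Proof. by case. Qed.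
Lemma srB (K : fieldType) (R : K -> Prop) x y : subring R -> R x -> R y -> R (x - y).
Proof. by case=> _ _ H _; apply: H. Qed.
Lemma srM (K : fieldType) (R : K -> Prop) x y : subring R -> R x -> R y -> R (x * y).
Proof. by case=> _ _ _ H; apply: H. Qed.
Lemma srN (K : fieldType) (R : K -> Prop) x : subring R -> R x -> R (- x).
Proof. by move=> h hx; rewrite -sub0r; apply: srB => //; apply: sr0. Qed.
Lemma srD (K : fieldType) (R : K -> Prop) x y : subring R -> R x -> R y -> R (x + y).
Proof. by move=> h hx hy; rewrite -[y]opprK; apply: srB => //; apply: srN. Qed.

Fixpoint spanr (K : fieldType) (R : K -> Prop) (l : seq K) : K -> Prop :=
  match l with
  | [::] => fun z => z = 0
  | x :: l' => fun z => exists d w, [/\ R d, spanr R l' w & z = d * x + w]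
  end.

Lemma span_iff (K : fieldType) (R : K -> Prop) (l : seq K) z :
  (exists c : seq K, [/\ size c = size l, (forall i, (i < size c)%N -> R c`_i)
      & z = \sum_(i < size l) c`_i * l`_i]) <-> spanr R l z.
Proof.
elim: l z => [|x l IH] z /=.
  split; first by case=> c [_ _ ->]; rewrite big_ord0.
  by move=> ->; exists [::]; split => //; rewrite big_ord0.
split.
  case=> [[|c0 c]] [//= [Hs] HR ->].
  rewrite big_ord_recl /=.
  exists c0, (\sum_(i < size l) c`_i * l`_i); split => //.
    by apply: (HR 0%N).
  apply/IH; exists c; split => // i Hi; exact: (HR i.+1).
case=> d [w [Rd /IH [c [Hs HR ->]] ->]].
exists (d :: c); split; first by rewrite /= Hs.
  by case=> [|i] //= Hi; apply: HR.
by rewrite big_ord_recl /=.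
Qed.

Lemma span_fg (K : fieldType) (R : K -> Prop) l : fin_gen R (spanr R l).
Proof. by exists l => z; rewrite span_iff. Qed.

Lemma fg_span (K : fieldType) (R F : K -> Prop) : fin_gen R F -> exists s, F = spanr R s.
Proof. by case=> s H; exists s; apply: sext => z; rewrite H span_iff. Qed.

Lemma span_submod (K : fieldType) (R : K -> Prop) l : subring R -> submod R (spanr R l).
Proof.
move=> hR; elim: l => [|x l [IH0 IHD IHM]] /=.
  by split => // [x y -> ->|r x _ ->]; rewrite ?addr0 ?mulr0.
split.
- by exists 0, 0; split => //; [apply: sr0|rewrite mul0r addr0].
- move=> u v [d1 [w1 [R1 S1 ->]]] [d2 [w2 [R2 S2 ->]]].
  exists (d1 + d2), (w1 + w2); split; [exact: srD|exact: IHD|ring].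
- move=> r u Rr [d [w [Rd Sw ->]]].
  exists (r * d), (r * w); split; [exact: srM|exact: IHM|ring].
Qed.

Lemma span_in (K : fieldType) (R : K -> Prop) l x : subring R -> x \in l -> spanr R l x.
Proof.
move=> hR; elim: l => [|y l IH] //=; rewrite inE => /orP [/eqP ->|Hx].
  exists 1, 0; split; [exact: sr1|by case: (span_submod l hR)|by rewrite mul1r addr0].
exists 0, x; split; [exact: sr0|exact: IH|by rewrite mul0r add0r].
Qed.

Lemma span_le (K : fieldType) (R I : K -> Prop) l :
  submod R I -> (forall x, x \in l -> I x) -> ssub (spanr R l) I.
Proof.
move=> [I0 ID IM]; elim: l => [|y l IH] Hl z /=; first by move->.
case=> d [w [Rd Sw ->]]; apply: ID; first by apply: IM => //; apply: Hl; rewrite inE eqxx.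
by apply: IH => // x Hx; apply: Hl; rewrite inE Hx orbT.
Qed.

Lemma span_Fbar (K : fieldType) (R : K -> Prop) l b :
  subring R -> b \in l -> b != 0 -> Fbar R (spanr R l).
Proof. by move=> hR Hb b0; split; [exact: span_submod|exists b; split => //; exact: span_in]. Qed.

Lemma span_ffg (K : fieldType) (R : K -> Prop) l b :
  subring R -> b \in l -> b != 0 -> ffg R (spanr R l).
Proof. by move=> hR Hb b0; split; [exact: span_Fbar Hb b0|exact: span_fg]. Qed.

Lemma scale_span (K : fieldType) (R : K -> Prop) l a :
  scale a (spanr R l) = spanr R (map ( *%R a) l).
Proof.
apply: sext; elim: l => [|x l IH] z /=.
  by split; [case=> e [-> ->]; rewrite mulr0|move->; exists 0; rewrite mulr0].
split.
  case=> e [[d [w [Rd Sw ->]]] ->].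
  exists d, (a * w); split => //; last by ring.
  by apply/IH; exists w.
case=> d [w [Rd /IH [e [Se ->]] ->]].
exists (d * x + e); split; last by ring.
by exists d, e.
Qed.

Lemma ffg_span (K : fieldType) (D F : K -> Prop) : ffg D F -> exists s, F = spanr D s.
Proof. by case=> _ /fg_span. Qed.

Lemma ideal_Fbar (K : fieldType) (D I : K -> Prop) b : ideal D I -> I b -> b != 0 -> Fbar D I.
Proof. by case=> _ hI Ib b0; split => //; exists b. Qed.

Lemma st_submod (K : fieldType) (D : K -> Prop) st E :
  semistar D st -> Fbar D E -> submod D (st E).
Proof. by case=> H _ _ _ /H []. Qed.

Lemma st_ext (K : fieldType) (D : K -> Prop) st E :
  semistar D st -> Fbar D E -> ssub E (st E).
Proof. by case=> _ _ _ H /H []. Qed.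

Lemma st_idem (K : fieldType) (D : K -> Prop) st E :
  semistar D st -> Fbar D E -> ssub (st (st E)) (st E).
Proof. by case=> _ _ _ H /H [] _ h z /h. Qed.

Lemma st_mono (K : fieldType) (D : K -> Prop) st E F :
  semistar D st -> Fbar D E -> Fbar D F -> ssub E F -> ssub (st E) (st F).
Proof. by case=> _ _ H _; apply: H. Qed.

Lemma collect (K : fieldType) (D : K -> Prop) st (I : K -> Prop) b :
  subring D -> semistar D st -> ideal D I -> I b -> b != 0 ->
  forall l : seq K, (forall x, x \in l -> star_f D st I x) ->
  exists m, [/\ (forall y, y \in m -> I y), b \in m
    & forall x, x \in l -> st (spanr D m) x].
Proof.
move=> hD hst hI Ib b0; elim => [|x l IH] Hl.
  by exists [:: b]; split; rewrite ?mem_head // => y; rewrite inE => /eqP ->.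
have [m [Hm bm Hx]] : exists m, [/\ (forall y, y \in m -> I y), b \in m
    & forall x, x \in l -> st (spanr D m) x].
  by apply: IH => y Hy; apply: Hl; rewrite inE Hy orbT.
have [F [HF FI stx]] := Hl x (mem_head _ _).
have [s Fs] := ffg_span HF.
have Hs : forall y, y \in s -> I y.
  by move=> y ys; apply: FI; rewrite Fs; apply: span_in.
have Fb : Fbar D (spanr D (s ++ m)) by apply: (span_Fbar hD _ b0); rewrite mem_cat bm orbT.
exists (s ++ m); split.
- by move=> y; rewrite mem_cat => /orP [/Hs|/Hm].
- by rewrite mem_cat bm orbT.
move=> y; rewrite inE => /orP [/eqP ->|yl].
  apply: (st_mono hst (proj1 HF) Fb) stx => // w; rewrite Fs.
  by apply: span_le; [exact: span_submod|move=> u us; apply: span_in; rewrite // mem_cat us].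
apply: (st_mono hst (span_Fbar hD bm b0) Fb) (Hx y yl).
by apply: span_le; [exact: span_submod|move=> u us; apply: span_in; rewrite // mem_cat us orbT].
Qed.

Lemma starf_submod (K : fieldType) (D : K -> Prop) st (I : K -> Prop) b :
  subring D -> semistar D st -> ideal D I -> I b -> b != 0 ->
  submod D (star_f D st I).
Proof.
move=> hD hst hI Ib b0.
have key : forall l : seq K, (forall x, x \in l -> star_f D st I x) ->
   exists F, [/\ ffg D F, ssub F I, submod D (st F) & forall x, x \in l -> st F x].
  move=> l Hl; have [m [Hm bm Hx]] := collect hD hst hI Ib b0 Hl.
  exists (spanr D m); split => //; first exact: span_ffg bm b0.
    by apply: span_le => //; case: hI.
  exact: st_submod hst (span_Fbar hD bm b0).
split.
- have [F [HF FI [F0 _ _] _]] := key [::] (fun x (h : x \in ([::] : seq K)) => ltac:(done)).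
  by exists F.
- move=> x y Hx Hy.
  have [F [HF FI [_ FD _] Hl]] := key [:: x; y] (fun u => ltac:(by rewrite !inE => /orP [/eqP ->|/eqP ->])).
  by exists F; split => //; apply: FD; apply: Hl; rewrite !inE eqxx ?orbT.
- move=> r x Rr [F [HF FI Fx]]; exists F; split => //.
  by case: (st_submod hst (proj1 HF)) => _ _; apply.
Qed.

Lemma starf_idem (K : fieldType) (D : K -> Prop) st (I F : K -> Prop) b :
  subring D -> semistar D st -> ideal D I -> I b -> b != 0 ->
  ffg D F -> ssub F (star_f D st I) ->
  exists G, [/\ ffg D G, ssub G I & ssub (st F) (st G)].
Proof.
move=> hD hst hI Ib b0 HF FI.
have [s Fs] := ffg_span HF.
have [m [Hm bm Hx]] := collect hD hst hI Ib b0 (l := s)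
   (fun x xs => FI x ltac:(by rewrite Fs; apply: span_in)).
have Gb := span_Fbar hD bm b0.
exists (spanr D m); split; first exact: span_ffg bm b0.
  by apply: span_le => //; case: hI.
have Gb2 : Fbar D (st (spanr D m)) by case: hst => H _ _ _; exact: H.
move=> z /(st_mono hst (proj1 HF) Gb2) H.
apply: (st_idem hst Gb); apply: H; rewrite Fs.
apply: span_le => //; exact: st_submod hst Gb.
Qed.

Lemma loc_sum (K : fieldType) (D T P : K -> Prop) :
  subring D -> subring T -> ssub D T -> P 0 -> ~ P 1 ->
  (forall a b, D a -> D b -> P (a * b) -> P a \/ P b) ->
  forall n (a b : 'I_n -> K), (forall i, locT D T P (a i)) -> (forall i, T (b i)) ->
  exists s, [/\ D s, ~ P s & T (s * \sum_i a i * b i)].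
Proof.
move=> hD hT DT P0 nP1 Pp; elim => [|n IH] a b Ha Hb.
  by exists 1; split => //; [exact: sr1|rewrite big_ord0 mulr0; exact: sr0].
have [s1 [D1 nP1' T1]] := IH (fun i => a (widen_ord (leqnSn n) i))
   (fun i => b (widen_ord (leqnSn n) i)) (fun i => Ha _) (fun i => Hb _).
have [t [s2 [Tt D2 nP2 Ea]]] := Ha ord_max.
have s20 : s2 != 0 by apply/eqP => E; apply: nP2; rewrite E.
exists (s1 * s2); split; first exact: srM.
  by move=> /(Pp _ _ D1 D2) [].
rewrite big_ord_recr /= Ea.
set X := \sum_(i < n) _.
have -> : s1 * s2 * (X + t / s2 * b ord_max) = s2 * (s1 * X) + s1 * (t * b ord_max).
  by field.
apply: srD => //; apply: srM => //; [exact: DT|exact: DT|exact: srM].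
Qed.

Lemma span_mono (K : fieldType) (D T : K -> Prop) s :
  subring D -> subring T -> ssub D T -> ssub (spanr D s) (spanr T s).
Proof.
move=> hD hT DT; apply: span_le; last by move=> x xs; apply: span_in.
have [h0 hDD hM] := span_submod s hT.
by split => // r x Dr; apply: hM; apply: DT.
Qed.

Lemma prod_span (K : fieldType) (D T : K -> Prop) s :
  subring D -> subring T -> ssub D T -> prodmod T (spanr D s) = spanr T s.
Proof.
move=> hD hT DT; apply: sext => z; split.
  case=> n [a [b [Ha Hb ->]]].
  have [h0 hDD hM] := span_submod s hT.
  apply: (big_ind (spanr T s)) => // i _; apply: hM => //.
  exact: (span_mono hD hT DT).
move/span_iff => [c [Hs Hc ->]].
exists (size s), (fun i : 'I_(size s) => c`_i), (fun i : 'I_(size s) => s`_i); split => //.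
  by move=> i; apply: Hc; rewrite Hs.
by move=> i; apply: span_in => //; apply: mem_nth.
Qed.

Lemma ideal_sub (K : fieldType) (D I : K -> Prop) : ideal D I -> ssub I D.
Proof. by case. Qed.

Theorem lemma3p14 (K : fieldType) (D T : K -> Prop)
  (st st' : (K -> Prop) -> (K -> Prop)) :
  subring D -> is_quotient_field D ->
  subring T -> ssub D T ->
  semistar D st -> semistar T st' ->
  seteq (st' T) T ->
  linked D T st st' ->
  seteq (ell D T st T) T.
Proof.
move=> hD hQ hT DT hst hst' stT Hlink.
have T1 := sr1 hT.
move=> z; split; last first.
  move=> Tz P [_ nP1 _]; exists 1%N, (fun _ => 1), (fun _ => z); split => //.
    by move=> _; exists 1, 1; split => //; [exact: sr1|rewrite divr1].
  by rewrite big_ord1 mul1r.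
move=> Hz.
pose J := fun d => D d /\ T (d * z).
have [a [b [Da Db b0 za]]] := hQ z.
have Jb : J b by split => //; rewrite za mulrC divfK //; exact: DT.
have hJ : ideal D J.
  split; first by move=> w [].
  split.
  - by split; [exact: sr0|rewrite mul0r; exact: sr0].
  - by move=> x y [Dx Tx] [Dy Ty]; split; [exact: srD|rewrite mulrDl; exact: srD].
  - by move=> r x Dr [Dx Tx]; split; [exact: srM|rewrite -mulrA; apply: srM => //; exact: DT].
have FDD : Fbar D D.
  split; last by exists 1; split; [exact: sr1|exact: oner_neq0].
  by split; [exact: sr0|move=> x y; exact: srD|move=> r x; exact: srM].
have FTT : Fbar T T.
  split; last by exists 1; split; [exact: sr1|exact: oner_neq0].
  by split; [exact: sr0|move=> x y; exact: srD|move=> r x; exact: srM].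
case: (Classical_Prop.classic (star_f D st J 1)) => [[F [HF FJ st1]]|nbJ].
  have FD : ssub F D by move=> w /FJ [].
  have HFs : seteq (st F) (st D).
    move=> w; split; first exact: (st_mono hst (proj1 HF) FDD FD).
    have FstF : Fbar D (st F) by case: hst => H _ _ _; apply: H; exact: (proj1 HF).
    have Dst : ssub D (st F).
      move=> d Dd; rewrite -[d]mulr1.
      by case: (st_submod hst (proj1 HF)) => _ _; apply.
    by move=> /(st_mono hst FDD FstF Dst) /(st_idem hst (proj1 HF)).
  have Hl := Hlink F HF FD HFs.
  have [x [Fx x0]] := proj2 (proj1 HF).
  have [s Fs] := ffg_span HF.
  rewrite Fs prod_span // in Hl.
  have [->|z0] := eqVneq z 0; first exact: sr0.
  have FG : Fbar T (spanr T s).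
    split; first exact: span_submod.
    by exists x; split => //; apply: (span_mono hD hT DT); rewrite -Fs.
  have FzG : Fbar T (scale z (spanr T s)).
    split; first by rewrite scale_span; exact: span_submod.
    by exists (z * x); split; [exists x; split => //; apply: (span_mono hD hT DT); rewrite -Fs|rewrite mulf_neq0].
  have zGT : ssub (scale z (spanr T s)) T.
    move=> w [g [Sg ->]]; move: g Sg.
    apply: span_le.
      split; first by rewrite mulr0; exact: sr0.
        by move=> u v Tu Tv; rewrite mulrDr; exact: srD.
      by move=> r u Tr Tu; rewrite mulrCA; exact: srM.
    move=> y ys; have [_ Ty] : J y by apply: FJ; rewrite Fs; exact: span_in.
    by rewrite mulrC.
  have := st_mono hst' FzG FTT zGT; move=> H.
  apply/stT; apply: H.
  have [_ H2 _ _] := hst'.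
  apply/(H2 z _ z0 FG); exists 1; split; last by rewrite mulr1.
  by apply/Hl; apply/stT.
pose S := fun I : K -> Prop => [/\ ideal D I, ssub J I & ~ star_f D st I 1].
have SJ : S J by split.
have bad_mono : forall I I', ssub I I' -> star_f D st I 1 -> star_f D st I' 1.
  by move=> I I' II' [F [HF FI st1]]; exists F; split => // w /FI /II'.
have HZ : forall Fm : set (set K), (forall X, Fm X -> S (fun w => J w \/ X w)) ->
    total_on Fm (@subset K) -> S (fun w => J w \/ bigcup Fm (fun X => X) w).
  move=> Fm FP Ftot.
  pose U := fun w => J w \/ bigcup Fm (fun X => X) w.
  pose Wof := fun o : option (K -> Prop) => fun w => J w \/
     (match o with Some X => X w | None => False end).
  pose fam := fun o : option (K -> Prop) => match o with Some X => Fm X | None => True end.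
  have famS : forall o, fam o -> S (Wof o).
    case=> [X|] /=; first by move/FP.
    move=> _; have -> : Wof None = J by apply: sext => w; rewrite /Wof; tauto.
    exact: SJ.
  have famU : forall o, fam o -> ssub (Wof o) U.
    case=> [X|] /= FX w [Jw|Xw]; [by left|by right; exists X|by left|done].
  have Ufam : forall w, U w -> exists o, fam o /\ Wof o w.
    move=> w [Jw|[X FX Xw]]; first by exists None; split => //; left.
    by exists (Some X); split => //; right.
  have comb : forall o1 o2, fam o1 -> fam o2 ->
      exists o, [/\ fam o, ssub (Wof o1) (Wof o) & ssub (Wof o2) (Wof o)].
    case=> [X|] [Y|] /= F1 F2.
    - have [XY|YX] := Ftot X Y F1 F2.
        exists (Some Y); split => //; rewrite /Wof /= => w [Jw|Xw]; first [by left | by case: Xw | right; first [exact: Xw | by apply: XY | by apply: YX]].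
      exists (Some X); split => //; rewrite /Wof /= => w [Jw|Xw]; first [by left | by case: Xw | right; first [exact: Xw | by apply: XY | by apply: YX]].
    - exists (Some X); split => //; rewrite /Wof /= => w [Jw|Xw]; first [by left | by case: Xw | right; first [exact: Xw | by apply: XY | by apply: YX]].
    - exists (Some Y); split => //; rewrite /Wof /= => w [Jw|Xw]; first [by left | by case: Xw | right; first [exact: Xw | by apply: XY | by apply: YX]].
    - by exists None; split.
  have Ulist : forall l : seq K, (forall x, x \in l -> U x) ->
      exists o, fam o /\ forall x, x \in l -> Wof o x.
    elim => [|x l IH] Hl; first by exists None.
    have [o1 [f1 H1]] : exists o, fam o /\ forall x, x \in l -> Wof o x.
      by apply: IH => y yl; apply: Hl; rewrite inE yl orbT.
    have [o2 [f2 H2]] := Ufam x (Hl x (mem_head _ _)).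
    have [o [fo S1 S2]] := comb o1 o2 f1 f2.
    exists o; split => // y; rewrite inE => /orP [/eqP ->|yl].
      exact: S2.
    exact/S1/H1.
  have Upair : forall u v, U u -> U v -> exists o, [/\ fam o, Wof o u & Wof o v].
    move=> u v Uu Uv.
    have [o [fo Ho]] := Ulist [:: u; v] (fun y => ltac:(by rewrite !inE => /orP [/eqP ->|/eqP ->])).
    by exists o; split => //; apply: Ho; rewrite !inE eqxx ?orbT.
  have UP : forall w, U w -> D w.
    by move=> w /Ufam [o [fo Wo]]; have [[hI _] _ _] := famS o fo; apply: hI.
  split.
  - split; first exact: UP.
    split.
    + by left; case: hJ => _ [].
    + move=> u v Uu Uv; have [o [fo Wu Wv]] := Upair u v Uu Uv.
      apply: (famU o fo); have [[_ [_ hA _]] _ _] := famS o fo; exact: hA.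
    + move=> r u Dr Uu; have [o [fo Wu]] := Ufam u Uu.
      apply: (famU o fo); have [[_ [_ _ hM]] _ _] := famS o fo; exact: hM.
  - by move=> w Jw; left.
  - move=> [F0 [HF0 F0U st1]].
    have [s Fs] := ffg_span HF0.
    have [o [fo Ho]] := Ulist s (fun x xs => F0U x ltac:(by rewrite Fs; apply: span_in)).
    have [[_ hWo] _ nb] := famS o fo.
    apply: nb; exists F0; split => //.
    by rewrite Fs; apply: span_le.
have [A [PA Amax]] := @Zorn_bigcup K (fun I => S (fun w => J w \/ I w)) HZ.
pose M := fun w => J w \/ A w.
have SM : S M := PA.
have [hM JM nbM] := SM.
have [MD [M0 MDD MMul]] := hM.
have Max : forall B, S B -> ssub M B -> ssub B M.
  move=> B SB MB; apply: Classical_Prop.NNPP => nBM.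
  apply: (Amax B).
    split; first by move=> w Aw; apply: MB; right.
    by move=> BA; apply: nBM => w /BA Aw; right.
  have -> : (fun w => J w \/ B w) = B.
    by apply: sext => w; split => [[/JM/MB|]|] //; right.
  exact: SB.
have Mb : M b by left.
have Mst : ssub M (star_f D st M).
  move=> w Mw; exists (spanr D [:: w; b]); split.
  - by apply: (span_ffg (b := b)); rewrite ?inE ?eqxx ?orbT.
  - apply: span_le => // y; by rewrite !inE => /orP [/eqP ->|/eqP ->].
  - apply: (st_ext hst); first by apply: (span_Fbar (b := b)); rewrite ?inE ?eqxx ?orbT.
    by apply: span_in; rewrite ?inE ?eqxx.
have Q : forall w, star_f D st M w -> D w -> M w.
  pose M' := fun w => star_f D st M w /\ D w.
  have SM' : S M'.
    have [s0 sD sM] := starf_submod hD hst hM Mb b0.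
    split.
    - split; first by move=> w [].
      split; first by split => //; exact: sr0.
        by move=> u v [Su Du] [Sv Dv]; split; [exact: sD|exact: srD].
      by move=> r u Dr [Su Du]; split; [exact: sM|exact: srM].
    - by move=> w Jw; split; [apply: Mst; apply: JM|case: Jw].
    - move=> [F [HF FM' st1]].
      have [G [HG GM stG]] := starf_idem hD hst hM Mb b0 HF (fun w h => proj1 (FM' w h)).
      by apply: nbM; exists G; split => //; apply: stG.
  move=> w Sw Dw; apply: (Max M' SM') => //.
  by move=> u Mu; split; [exact: Mst|exact: MD].
have nM1 : ~ M 1 by move=> /Mst.
have Mprime : forall a b, D a -> D b -> M (a * b) -> M a \/ M b.
  move=> a0 b1 Da0 Db1 Mab.
  case: (Classical_Prop.classic (M a0)) => [|nMa]; first by left.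
  case: (Classical_Prop.classic (M b1)) => [|nMb]; first by right.
  exfalso.
  pose C := fun d => D d /\ M (a0 * d).
  have hC : ideal D C.
    split; first by move=> w [].
    split.
    - by split; [exact: sr0|rewrite mulr0].
    - by move=> u v [Du Mu] [Dv Mv]; split; [exact: srD|rewrite mulrDr; exact: MDD].
    - by move=> r u Dr [Du Mu]; split; [exact: srM|rewrite mulrCA; exact: MMul].
  have MC : ssub M C by move=> w Mw; split; [exact: MD|exact: MMul].
  have : star_f D st C 1.
    apply: Classical_Prop.NNPP => nb.
    have := Max C (And3 hC (fun w Jw => MC w (JM w Jw)) nb) MC b1.
    by move=> H; apply: nMb; apply: H; split.
  move=> [F [HF FC st1]].
  have a00 : a0 != 0 by apply/eqP => E; apply: nMa; rewrite E.
  have [x [Fx x0]] := proj2 (proj1 HF).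
  have [s Fs] := ffg_span HF.
  have FaF : Fbar D (scale a0 F).
    split; first by rewrite Fs scale_span; exact: span_submod.
    by exists (a0 * x); split; [exists x|rewrite mulf_neq0].
  apply: nMa; apply: Q; last exact: Da0.
  exists (scale a0 F); split.
  - by split => //; rewrite Fs scale_span; exact: span_fg.
  - by move=> w [e [Fe ->]]; have [_] := FC e Fe.
  - have [_ H2 _ _] := hst.
    apply/(H2 a0 F a00 (proj1 HF)); exists 1; split => //; last by rewrite mulr1.
have qM : quasi_prime D (star_f D st) M.
  split => //; split => //; first by exists b.
  by move=> w; split => [[]|Mw]; [exact: Q|split; [exact: Mst|exact: MD]].
have [n [a1 [b1 [Ha Hb Ez]]]] := Hz M qM.
have [s [Ds nMs Ts]] := loc_sum hD hT DT M0 nM1 Mprime Ha Hb.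
rewrite -Ez in Ts.
by case: nMs; apply: JM; split.
Qed.
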